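(* Under the standing setting and assumptions (A1)–(A3) described in the context, fix $X\in\mathcal X$ and assume the set-valued map $\mathcal F:\mathcal X\rightrightarrows\mathcal M$, $\mathcal F(Y)=\{Z\in\mathcal M: Y+Z\in\mathcal A\}$, is lower semicontinuous at $X$. Then $\mathcal R_\varepsilon$ is lower semicontinuous at $X$ for every $\varepsilon>0$.
   Context: Let $\mathcal X$ be a Hausdorff, first countable, locally convex topological vector space over $\mathbb R$, partially ordered by a partial order $\geq$ with positive cone $\mathcal X_+=\{X\in\mathcal X: X\geq 0\}$. Let $\mathcal M\subset\mathcal X$ be a vector subspace with $1<\dim\mathcal M<\infty$, carrying the relative topology, and let $\pi:\mathcal M\to\mathbb R$ be linear. Standing assumptions: (A1) there is $U\in\mathcal M\cap\mathcal X_+$ with $\pi(U)=1$; (A2) $\mathcal A\subsetneq\mathcal X$ is closed, contains $0$, and satisfies $\mathcal A+\mathcal X_+\subset\mathcal A$; (A3) the map $\rho(X)=\inf\{\pi(Z): Z\in\mathcal M,\ X+Z\in\mathcal A\}$ is finitely valued and continuous on $\mathcal X$. For $\varepsilon>0$, $\mathcal R_\varepsilon(X)=\{Z\in\mathcal M: X+Z\in\mathcal A,\ \pi(Z)<\rho(X)+\varepsilon\}$. A set-valued map $\mathcal S:\mathcal X\rightrightarrows\mathcal M$ is lower semicontinuous at $X$ if for every open $\mathcal U\subset\mathcal M$ with $\mathcal S(X)\cap\mathcal U\neq\emptyset$ there is an open neighborhood $\mathcal U_X$ of $X$ with $\mathcal S(Y)\cap\mathcal U\neq\emptyset$ for all $Y\in\mathcal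 U_X$. *)

(* Defs.v *)
From HB Require Import structures.
From mathcomp Require Import all_boot all_order all_algebra.
From mathcomp Require Import all_classical all_reals all_analysis.
Set Implicit Arguments. Unset Strict Implicit. Unset Printing Implicit Defensive.
Import Order.TTheory GRing.Theory Num.Theory.
Local Open Scope classical_set_scope.
Local Open Scope ring_scope.

Definition first_countable (T : topologicalType) : Prop :=
  forall x : T, exists B : nat -> set T,
    (forall n, open (B n) /\ B n x) /\
    (forall U, nbhs x U -> exists n, B n `<=` U).

Definition is_partial_order (T : Type) (ge : T -> T -> Prop) : Prop :=
  (forall x, ge x x) /\
  (forall x y, ge x y -> ge y x -> x = y) /\
  (forall x y z, ge x y -> ge y z -> ge x z).

Definition subspace_with_basis (R : realType) (V : lmodType R) (M : set V)
    (n : nat) (b : 'I_n -> V) : Prop :=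
  (forall c : 'I_n -> R, \sum_(i < n) c i *: b i = 0 -> forall i, c i = 0) /\
  M = [set x | exists c : 'I_n -> R, x = \sum_(i < n) c i *: b i].

Definition linear_on (R : realType) (V : lmodType R) (M : set V)
    (pi : V -> R) : Prop :=
  forall (a : R) (x y : V), M x -> M y -> pi (a *: x + y) = a * pi x + pi y.

Definition acc_map (R : realType) (V : lmodType R) (M A : set V) (Y : V) : set V :=
  [set Z | M Z /\ A (Y + Z)].

Definition rho_set (R : realType) (V : lmodType R) (M A : set V) (pi : V -> R)
    (Y : V) : set R := pi @` acc_map M A Y.

Definition rho (R : realType) (V : lmodType R) (M A : set V) (pi : V -> R)
    (Y : V) : R := inf (rho_set M A pi Y).

Definition R_eps (R : realType) (V : lmodType R) (M A : set V) (pi : V -> R)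
    (eps : R) (Y : V) : set V :=
  [set Z | M Z /\ A (Y + Z) /\ pi Z < rho M A pi Y + eps].

(* Lower semicontinuity at X of S : V ⇉ M, where M carries the relative
   topology: open subsets of M are exactly the sets M ∩ W with W open in V. *)
Definition lsc_at (T : topologicalType) (M : set T) (S : T -> set T) (X : T) : Prop :=
  forall W : set T, open W ->
    S X `&` (M `&` W) !=set0 ->
    exists UX : set T, open UX /\ UX X /\
      forall Y, UX Y -> S Y `&` (M `&` W) !=set0.

(* Main.v *)
Require Import Defs.
From HB Require Import structures.
From mathcomp Require Import all_boot all_order all_algebra.
From mathcomp Require Import all_classical all_reals all_analysis.
From mathcomp Require Import lra.
Import Order.TTheory GRing.Theory Num.Theory.
Import numFieldTopology.Exports numFieldNormedType.Exports.
Local Open Scope classical_set_scope.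
Local Open Scope ring_scope.


Lemma M_comb (R : realType) (V : lmodType R) (M : set V) (n : nat) (b : 'I_n -> V)
  (a : R) (x y : V) : subspace_with_basis M b -> M x -> M y -> M (a *: x + y).
Proof.
move=> [_ ->] [c ->] [d ->]; exists (fun i => a * c i + d i).
rewrite scaler_sumr -big_split /=; apply: eq_bigr => i _.
by rewrite scalerDl scalerA.
Qed.

Arguments M_comb {R V M n b} a [x y].

Lemma rho_shift1 (R : realType) (V : lmodType R) (M : set V) (n : nat) (b : 'I_n -> V)
  (pi : V -> R) (A : set V) (Y Z : V) :
  subspace_with_basis M b -> linear_on M pi ->
  (forall Y : V, rho_set M A pi Y !=set0 /\ has_lbound (rho_set M A pi Y)) ->
  M Z -> pi Z + rho M A pi (Y + Z) <= rho M A pi Y.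
Proof.
move=> hM hpi hr MZ.
rewrite {2}/rho; apply: lb_le_inf; first by case: (hr Y).
move=> _ [W [MW AW] <-].
have MWZ : M ((-1) *: Z + W) by exact: (M_comb (-1) hM MZ MW).
have := ge_inf (proj2 (hr (Y + Z))).
move=> /(_ (pi ((-1) *: Z + W))) H.
have : rho M A pi (Y + Z) <= pi ((-1) *: Z + W).
  apply: H; exists ((-1) *: Z + W) => //; split => //.
  by rewrite scaleN1r addrA addrK.
rewrite hpi // mulN1r => h; lra.
Qed.

Lemma rho_shift2 (R : realType) (V : lmodType R) (M : set V) (n : nat) (b : 'I_n -> V)
  (pi : V -> R) (A : set V) (Y Z : V) :
  subspace_with_basis M b -> linear_on M pi ->
  (forall Y : V, rho_set M A pi Y !=set0 /\ has_lbound (rho_set M A pi Y)) ->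
  M Z -> rho M A pi Y <= pi Z + rho M A pi (Y + Z).
Proof.
move=> hM hpi hr MZ.
rewrite -lerBlDl {2}/rho; apply: lb_le_inf; first by case: (hr (Y + Z)).
move=> _ [W [MW AW] <-].
have MWZ : M (1 *: Z + W) by exact: (M_comb 1 hM MZ MW).
have : rho M A pi Y <= pi (1 *: Z + W).
  apply: (ge_inf (proj2 (hr Y))); exists (1 *: Z + W) => //; split => //.
  by rewrite scale1r addrA.
rewrite hpi // mul1r => h; lra.
Qed.

Arguments rho_shift1 {R V M n b pi A} Y [Z].
Arguments rho_shift2 {R V M n b pi A} Y [Z].

Theorem mainTheorem18 (R : realType) (V : tvsType R)
    (ge : V -> V -> Prop) (M : set V) (n : nat) (b : 'I_n -> V)
    (pi : V -> R) (A : set V) (X : V) :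
  hausdorff_space V ->
  first_countable V ->
  is_partial_order ge ->
  (1 < n)%N ->
  subspace_with_basis M b ->
  linear_on M pi ->
  (* (A1) *)
  (exists U : V, M U /\ ge U 0 /\ pi U = 1) ->
  (* (A2) *)
  closed A -> A 0 -> A <> setT ->
  (forall Y P : V, A Y -> ge P 0 -> A (Y + P)) ->
  (* (A3) rho finitely valued and continuous *)
  (forall Y : V, rho_set M A pi Y !=set0 /\ has_lbound (rho_set M A pi Y)) ->
  continuous (fun Y : V => rho M A pi Y) ->
  lsc_at M (acc_map M A) X ->
  forall eps : R, 0 < eps -> lsc_at M (R_eps M A pi eps) X.
Proof.
move=> _ _ _ _ hM hpi _ _ _ _ _ hr crho hF eps eps0.
move=> W oW [Z [[MZ [AZ piZ]] [_ WZ]]].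
have h0 : - eps < rho M A pi (X + Z).
  have := rho_shift2 X hM hpi hr MZ.
  move=> le; lra.
have cg : {for (X, Z), continuous (fun p : V * V => rho M A pi (p.1 + p.2))}.
  apply: (@continuous_comp _ _ _ (fun p : V * V => p.1 + p.2) (rho M A pi)).
    exact: add_continuous.
  exact: crho.
have := cvgr_gt _ cg _ h0.
move=> [[A1 A2] /= [nA1 nA2] sub].
move: nA1; rewrite nbhsE => -[B1 [oB1 B1X] B1A1].
move: nA2; rewrite nbhsE => -[B2 [oB2 B2Z] B2A2].
have [UX [oUX [UXX HUX]]] := hF (W `&` B2) (openI oW oB2)
  (ex_intro _ Z (conj (conj MZ AZ) (conj MZ (conj WZ B2Z)))).
exists (UX `&` B1); split; first exact: openI.
split; first by split.
move=> Y [UXY B1Y].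
have [Z' [[MZ' AZ'] [_ [WZ' B2Z']]]] := HUX Y UXY.
exists Z'; split; last by split.
split => //; split => //.
have hlt : - eps < rho M A pi (Y + Z').
  by apply: (sub (Y, Z')); split; [apply: B1A1 | apply: B2A2].
have := rho_shift1 Y hM hpi hr MZ'.
move=> le; lra.
Qed.
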